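(* Let $n\ge2$ and $\rho\in\mathbb{C}\setminus\{-1,0,1\}$. For every $z\in\mathbb{C}$ with $z\neq\rho$ and $z\neq1/\rho$, put $$\lambda(\rho,z)=\frac{z(1-\rho^2)}{(z-\rho)(1-z\rho)}.$$ Then $$p_{2n}(\rho,z)=\frac{(z-\rho)^n(1-z\rho)^n}{\rho^n(1-\rho^2)^{n-1}}\,\psi_n\bigl(\rho,\lambda(\rho,z)\bigr).$$ Moreover, for $z\neq0$, $\lambda(\rho,z)=\sigma(\rho,-i\ln z)$, i.e. $\lambda(\rho,z)=\frac{1-\rho^2}{1-\rho(z+z^{-1})+\rho^2}$.
   Context: $K_n(\rho)=\left[\rho^{|j-k|}\right]_{j,k=1}^n$ and $\psi_n(\rho,\lambda)=\det[\lambda I_n-K_n(\rho)]$ is its characteristic polynomial. $p_{2n}(\rho,z)=z^{2n}+(1+\rho^2)\sum_{k=1}^{n-1}z^{2k}-2\rho\sum_{k=0}^{n-1}z^{2k+1}+1$ (equal to $\frac{z^{2n}(z-\rho)^2-(\rho z-1)^2}{z^2-1}$ for $z\ne\pm1$). $\sigma(\rho,\theta)=\frac{1-\rho^2}{1-2\rho\cos\theta+\rho^2}$, extended to complex $\theta$ (so that with $\theta=-i\ln z$ one has $2\cos\theta=z+z^{-1}$). *)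

(* Defs.v *)
(* The complex numbers are modelled as R[i] = complex R
   for an arbitrary R : realType (real-closed library's complex.v). *)
From HB Require Import structures.
From mathcomp Require Import all_boot all_order all_algebra.
From mathcomp Require Import complex.
From mathcomp Require Import reals.
Set Implicit Arguments. Unset Strict Implicit. Unset Printing Implicit Defensive.
Import Order.TTheory GRing.Theory Num.Theory.
Local Open Scope ring_scope.

Definition Kmat (F : comNzRingType) (n : nat) (rho : F) : 'M[F]_n :=
  \matrix_(j < n, k < n) rho ^+ (maxn j k - minn j k)%N.

(* psi_n(rho, lambda) = det(lambda I_n - K_n(rho)): the characteristic
   polynomial of K_n(rho) (mxpoly's char_poly = det('X I - A)) evaluated at lambda *)
Definition psi (F : comNzRingType) (n : nat) (rho lam : F) : F :=
  (char_poly (Kmat n rho)).[lam].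

Definition p2n (F : comNzRingType) (n : nat) (rho z : F) : F :=
  z ^+ (2 * n) + (1 + rho ^+ 2) * \sum_(1 <= k < n) z ^+ (2 * k)
  - 2 * rho * \sum_(0 <= k < n) z ^+ (2 * k + 1) + 1.

Definition lam (F : fieldType) (rho z : F) : F :=
  z * (1 - rho ^+ 2) / ((z - rho) * (1 - z * rho)).

(* sigma(rho,theta) = (1-rho^2)/(1 - 2 rho cos theta + rho^2), written in the
   variable z = e^{i theta} (theta = -i ln z), so that 2 cos theta = z + z^{-1}. *)
Definition sigma_z (F : fieldType) (rho z : F) : F :=
  (1 - rho ^+ 2) / (1 - rho * (z + z^-1) + rho ^+ 2).

(* Main.v *)
Require Import Defs.
From HB Require Import structures.
From mathcomp Require Import all_boot all_order all_algebra.
From mathcomp Require Import complex.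
From mathcomp Require Import reals.
From mathcomp Require Import ring.
Import Order.TTheory GRing.Theory Num.Theory.
Local Open Scope ring_scope.

Section S.
Variable F : fieldType.
Definition G (f : nat -> nat -> F) m : 'M[F]_m := \matrix_(i < m, j < m) f i j.

Lemma minorG (f : nat -> nat -> F) m (i0 j0 : 'I_m.+1) :
  row' i0 (col' j0 (G f m.+1)) = G (fun i j => f (bump i0 i) (bump j0 j)) m.
Proof. by apply/matrixP => i j; rewrite !mxE. Qed.

Lemma G_ext (f g : nat -> nat -> F) m : (forall i j, f i j = g i j) -> G f m = G g m.
Proof. by move=> e; apply/matrixP => i j; rewrite !mxE e. Qed.

Lemma G_tr (f : nat -> nat -> F) m : (G f m)^T = G (fun i j => f j i) m.
Proof. by apply/matrixP => i j; rewrite !mxE. Qed.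

Lemma det_rowop (f : nat -> nat -> F) m a :
  \det (G f m.+2) = \det (G (fun i j => if i == 0%N then f 0%N j - a * f 1%N j else f i j) m.+2).
Proof.
rewrite (@determinant_multilinear _ _ _ (G (fun i j => if i == 0%N then f 0%N j - a * f 1%N j else f i j) m.+2)
   (G (fun i j => if i == 0%N then f 1%N j else f i j) m.+2) ord0 1 a).
- rewrite (@determinant_alternate _ _ (G (fun i j => if i == 0%N then f 1%N j else f i j) m.+2) ord0 (lift ord0 ord0)) //.
  + by rewrite mul1r mulr0 addr0.
  + by move=> j; rewrite !mxE.
- by apply/matrixP => i j; rewrite !mxE /=; ring.
- by apply/matrixP => i j; rewrite !mxE.
- by apply/matrixP => i j; rewrite !mxE.
Qed.

Definition Bf (rho l : F) (i j : nat) : F := l *+ (i == j) - rho ^+ (maxn i j - minn i j).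

Lemma dS i j : (maxn i.+1 j.+1 - minn i.+1 j.+1 = maxn i j - minn i j)%N.
Proof. by rewrite maxnSS minnSS subSS. Qed.

Lemma Bf_shift rho l i j : Bf rho l i.+1 j.+1 = Bf rho l i j.
Proof. by rewrite /Bf dS eqSS. Qed.

Lemma Bf_sym rho l i j : Bf rho l i j = Bf rho l j i.
Proof. by rewrite /Bf maxnC minnC eq_sym. Qed.

Definition B2 (rho l : F) (i j : nat) : F :=
  match i, j with
  | 0, 0 => l * (1 + rho ^+ 2) - (1 - rho ^+ 2)
  | 0, 1 => - (rho * l)
  | 1, 0 => - (rho * l)
  | 0, _ => 0
  | _, 0 => 0
  | i.+1, j.+1 => Bf rho l i j
  end.

Lemma B2E rho l i j :
  (fun i j => if i == 0%N then
     (fun i j => if i == 0%N then Bf rho l 0 j - rho * Bf rho l 1 j else Bf rho l i j) j 0%N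
     - rho * (fun i j => if i == 0%N then Bf rho l 0 j - rho * Bf rho l 1 j else Bf rho l i j) j 1%N
   else (fun i j => if i == 0%N then Bf rho l 0 j - rho * Bf rho l 1 j else Bf rho l i j) j i) i j
  = B2 rho l i j.
Proof.
case: i => [|[|i]]; case: j => [|[|j]] /=; rewrite /Bf /= ?max0n ?min0n ?subn0 ?dS ?max0n ?min0n ?subn0 //.
all: try (rewrite ?mulr0n ?mulr1n ?expr0 ?expr1 ?exprS; ring).
all: try (by rewrite -/(Bf _ _ _ _) Bf_sym).
all: by rewrite !eqSS eq_sym maxnC minnC.
Qed.

Lemma bump0E i : bump 0 i = i.+1.
Proof. by rewrite /bump leq0n add1n. Qed.

Lemma bumpo k i : bump (@ord0 k) i = i.+1.
Proof. exact: bump0E. Qed.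

Lemma bump1 k i : bump (@lift k.+2 ord0 ord0) i = bump 1 i.
Proof. by []. Qed.

Lemma minorE (f g : nat -> nat -> F) m (i0 j0 : 'I_m.+1) :
  (forall i j, f (bump i0 i) (bump j0 j) = g i j) -> row' i0 (col' j0 (G f m.+1)) = G g m.
Proof. by move=> e; apply/matrixP => i j; rewrite !mxE e. Qed.

Lemma det_rec rho l m :
  \det (G (Bf rho l) m.+2) = (l * (1 + rho ^+ 2) - (1 - rho ^+ 2)) * \det (G (Bf rho l) m.+1)
    - rho ^+ 2 * l ^+ 2 * \det (G (Bf rho l) m).
Proof.
rewrite (det_rowop _ _ rho) -det_tr G_tr (det_rowop _ _ rho).
rewrite (G_ext _ (B2 rho l)); last exact: B2E.
rewrite (expand_det_row _ ord0) big_ord_recl big_ord_recl big1; last first.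
  by move=> i _; rewrite !mxE /= mul0r.
pose N := fun i j => B2 rho l i.+1 (bump 1 j).
rewrite /cofactor (@minorE _ (Bf rho l) m.+1 ord0 ord0); last by move=> i j; rewrite !bumpo; case: i => [|i]; case: j.
rewrite (@minorE _ N m.+1 ord0 (lift ord0 ord0)); last by move=> i j; rewrite bumpo bump1.
rewrite [\det (G N _)](expand_det_col _ ord0) big_ord_recl big1; last first.
  by move=> i _; rewrite !mxE /N /= mul0r.
rewrite /cofactor (@minorE _ (Bf rho l) m ord0 ord0); last first.
  by move=> i j; rewrite /N !bumpo /bump /= add0n Bf_shift.
rewrite !mxE /N /= !expr0 !expr1; ring.
Qed.

Lemma psiE n (rho l : F) : psi n rho l = \det (G (Bf rho l) n).
Proof.
rewrite /psi /char_poly -horner_evalE -det_map_mx; congr (\det _).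
apply/matrixP => i j; rewrite !mxE /= horner_evalE hornerD hornerN hornerC hornerMn hornerX.
by [].
Qed.

Lemma p2n_diff (rho z : F) k : (1 <= k)%N ->
  p2n k.+1 rho z - p2n k rho z = z ^+ (2 * k) * (z - rho) ^+ 2.
Proof.
move=> hk; rewrite /p2n big_nat_recr //= [\sum_(0 <= i < k.+1) _]big_nat_recr //=.
rewrite mulnS exprD exprD expr1.
set w := z ^+ (2 * k); set s1 := \sum_(1 <= i < k) _; set s2 := \sum_(0 <= i < k) _.
ring.
Qed.

Definition ff (rho z : F) k := if k == 0%N then 1 - rho ^+ 2 else p2n k rho z.

Lemma ff_rec rho z k : ff rho z k.+2 = (1 + z ^+ 2) * ff rho z k.+1 - z ^+ 2 * ff rho z k.
Proof.
case: k => [|k].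
  rewrite /ff /p2n /= !big_mkord !big_ord_recr !big_ord0 /= big_nat1 big_geq //. ring.
rewrite /ff /=.
have h1 := @p2n_diff rho z k.+2 isT.
have h2 := @p2n_diff rho z k.+1 isT.
have e : p2n k.+3 rho z = p2n k.+2 rho z + z ^+ 2 * (p2n k.+2 rho z - p2n k.+1 rho z).
  by rewrite h2 -[p2n k.+3 rho z](subrK (p2n k.+2 rho z)) h1 mulnS exprD; ring.
rewrite e; ring.
Qed.

End S.
Arguments G {F}. Arguments Bf {F}. Arguments ff {F}. Arguments det_rec {F}. Arguments ff_rec {F}. Arguments psiE {F}.

Local Open Scope complex_scope.

Theorem lemma3p2 (R : realType) (n : nat) (rho : R[i]) :
  (2 <= n)%N -> rho != 0 -> rho != 1 -> rho != -1 ->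
  forall z : R[i], z != rho -> z != rho^-1 ->
    p2n n rho z =
      (z - rho) ^+ n * (1 - z * rho) ^+ n / (rho ^+ n * (1 - rho ^+ 2) ^+ n.-1)
        * psi n rho (lam rho z)
    /\ (z != 0 -> lam rho z = sigma_z rho z).
Proof.
move=> hn h0 h1 hm1 z hz hzi.
have hzr : z - rho != 0 by rewrite subr_eq0.
have hzr' : 1 - z * rho != 0.
  rewrite subr_eq0; apply/negP => /eqP h; move/negP: hzi; apply.
  by apply/eqP; rewrite -[z](mulfK h0) -h mul1r.
have hr2 : 1 - rho ^+ 2 != 0.
  have -> : 1 - rho ^+ 2 = (1 - rho) * (1 + rho) by ring.
  rewrite mulf_neq0 //; first by rewrite subr_eq0 eq_sym.
  by rewrite addrC addr_eq0.
set a := (z - rho) * (1 - z * rho).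
have ha : a != 0 by rewrite mulf_neq0.
set l := lam rho z.
have el : a * l = z * (1 - rho ^+ 2) by rewrite /l /lam -/a; field.
have ec : a * (l * (1 + rho ^+ 2) - (1 - rho ^+ 2)) = rho * (1 - rho ^+ 2) * (1 + z ^+ 2).
  rewrite mulrBr mulrA el /a; ring.
have T : forall k, ff rho z k * (rho ^+ k * (1 - rho ^+ 2) ^+ k)
                   = (1 - rho ^+ 2) * a ^+ k * \det (G (Bf rho l) k).
  suff : forall k, (ff rho z k * (rho ^+ k * (1 - rho ^+ 2) ^+ k)
                   = (1 - rho ^+ 2) * a ^+ k * \det (G (Bf rho l) k)) /\
                   (ff rho z k.+1 * (rho ^+ k.+1 * (1 - rho ^+ 2) ^+ k.+1)
                   = (1 - rho ^+ 2) * a ^+ k.+1 * \det (G (Bf rho l) k.+1)).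
    by move=> H k; case: (H k).
  elim=> [|k [H0 H1]].
    split.
      by rewrite /ff /= det_mx00 !expr0 !mulr1.
    rewrite (expand_det_row _ ord0) big_ord1 /cofactor det_mx00 !mxE /=.
    rewrite /ff /p2n /= !big_mkord !big_ord_recr !big_ord0 /= /Bf /=.
    rewrite big_geq // !expr1 !expr0 mulr1n.
    have -> : l - 1 = (z * (1 - rho ^+ 2) - a) / a by rewrite -el; field.
    rewrite !mulr1; set X := z * (1 - rho ^+ 2) - a.
    rewrite -[(1 - rho ^+ 2) * a * _]mulrA [a * (X / a)]mulrC divfK // /X /a; ring.
  split=> //.
  rewrite ff_rec det_rec.
  have -> : ((1 + z ^+ 2) * ff rho z k.+1 - z ^+ 2 * ff rho z k) *
     (rho ^+ k.+2 * (1 - rho ^+ 2) ^+ k.+2) =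
     (1 + z ^+ 2) * rho * (1 - rho ^+ 2) * (ff rho z k.+1 * (rho ^+ k.+1 * (1 - rho ^+ 2) ^+ k.+1))
     - z ^+ 2 * rho ^+ 2 * (1 - rho ^+ 2) ^+ 2 * (ff rho z k * (rho ^+ k * (1 - rho ^+ 2) ^+ k)).
    rewrite !exprS; ring.
  rewrite H0 H1.
  have -> : (1 - rho ^+ 2) * a ^+ k.+2 *
    ((l * (1 + rho ^+ 2) - (1 - rho ^+ 2)) * \det (G (Bf rho l) k.+1) -
     rho ^+ 2 * l ^+ 2 * \det (G (Bf rho l) k)) =
    (1 - rho ^+ 2) * a ^+ k * ((a * (l * (1 + rho ^+ 2) - (1 - rho ^+ 2))) * a * \det (G (Bf rho l) k.+1) -
     rho ^+ 2 * (a * l) ^+ 2 * \det (G (Bf rho l) k)).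
    rewrite !exprS; ring.
  rewrite ec el !exprS; ring.
split; last first.
  move=> hz0; rewrite /sigma_z.
  have -> : 1 - rho * (z + z^-1) + rho ^+ 2 = a / z by rewrite /a; field.
  rewrite -/l; apply: (mulfI ha); rewrite el; field; by rewrite hz0 ha.
case: n hn => [|n] // hn.
have Tn : p2n n.+1 rho z * (rho ^+ n.+1 * (1 - rho ^+ 2) ^+ n.+1) = (1 - rho ^+ 2) * a ^+ n.+1 * \det (G (Bf rho l) n.+1) := T n.+1.
rewrite psiE /= -exprMn -/a.
have hY : rho ^+ n.+1 * (1 - rho ^+ 2) ^+ n != 0 by rewrite mulf_neq0 // expf_neq0.
apply: (mulIf hY); rewrite [_ / _ * _]mulrAC divfK //.
apply: (mulfI hr2).
rewrite [in RHS]mulrA -Tn [(1 - rho ^+ 2) ^+ n.+1]exprS.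
set c := 1 - rho ^+ 2; set P := p2n _ _ _; set r := rho ^+ n.+1; set cn := c ^+ n; ring.
Qed.
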